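(* Let $A=(a,\ ha+d,\ ha+2d,\ ha+4d,\ \dots,\ ha+2kd)$ where $\gcd(a,d)=1$, $a,h,d,k\in\mathbb{P}$, $a>2$, $d>h$, $1\le 2k\le a-1$. Write $a-1=2ks+t$ with $1\le t\le 2k$. Then \begin{align*} \sum_{r=0}^{a-1}x^{N_r}&=1+\frac{x^{ha+d}\big(1-x^{(ha+2kd)(s+1)}\big)}{1-x^{ha+2kd}}+\frac{x^{ha+2d}\big(1-x^{(ha+2kd)s}\big)\big(1-x^{2dk}\big)}{(1-x^{ha+2kd})(1-x^{2d})}\\ &\quad+\frac{x^{2ha+3d}\big(1-x^{(ha+2kd)s}\big)\big(1-x^{2d(k-1)}\big)}{(1-x^{ha+2kd})(1-x^{2d})}+f_1(x), \end{align*} where $$f_1(x)=\begin{cases}\dfrac{x^{ha(s+1)+d(2ks+2)}\big(1-x^{d(t-1)}\big)}{1-x^{2d}}+\dfrac{x^{ha(s+2)+d(2ks+3)}\big(1-x^{d(t-1)}\big)}{1-x^{2d}} & \text{if } t \text{ is odd},\\[8pt] \dfrac{x^{ha(s+1)+d(2ks+2)}\big(1-x^{dt}\big)}{1-x^{2d}}+\dfrac{x^{ha(s+2)+d(2ks+3)}\big(1-x^{d(t-2)}\big)}{1-x^{2d}} & \text{if } t \text{ is even}.\end{cases}$$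
   Context: For $A=(a,c_1,\dots,c_m)$ of positive integers with $\gcd(A)=1$ and $0\le r\le a-1$, $N_r$ is the least nonnegative integer $a_0\equiv r\pmod a$ that can be written as $\sum_{i=1}^m c_ix_i$ with all $x_i$ nonnegative integers. $\mathbb{P}=\{1,2,\dots\}$. *)

(* Defs.v *)
From mathcomp Require Import all_boot all_order all_algebra.
Set Implicit Arguments. Unset Strict Implicit. Unset Printing Implicit Defensive.

Definition representable (c : seq nat) (n : nat) : Prop :=
  exists xs : seq nat, size xs = size c /\
    n = \sum_(i < size c) nth 0 c i * nth 0 xs i.

(* isN a c r n : n is N_r for A = (a, c_1, ..., c_m), i.e. the least
   nonnegative integer congruent to r mod a that is representable by c. *)
Definition isN (a : nat) (c : seq nat) (r n : nat) : Prop :=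
  n = r %[mod a] /\ representable c n /\
  (forall m, m = r %[mod a] -> representable c m -> n <= m).

Definition gensA (a h d k : nat) : seq nat :=
  (h * a + d) :: [seq h * a + 2 * j * d | j <- iota 1 k].

(* Main.v *)
Require Import Defs.
From mathcomp Require Import all_boot all_order all_algebra.
From mathcomp Require Import zify ring lra.
Import GRing.Theory.

Definition Fw (H d k w : nat) : nat :=
  if w is w'.+1 then
    let i := w' %/ (2*k) in let u := w' %% (2*k) in
    if odd u || (u == 0) then H*(i+1) + d*w else H*(i+2) + d*w
  else 0.

Lemma rep_fun c (f : nat -> nat) :
  representable c (\sum_(i < size c) nth 0 c i * f i).
Proof.
exists (mkseq f (size c)); rewrite size_mkseq; split=>//.
by apply: eq_bigr => i _; rewrite nth_mkseq.
Qed.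

Lemma rep_add c m n : representable c m -> representable c n -> representable c (m+n).
Proof.
move=> [xs [Hx ->]] [ys [Hy ->]].
exists (mkseq (fun i => nth 0 xs i + nth 0 ys i) (size c)); rewrite size_mkseq; split=>//.
rewrite -big_split /=; apply: eq_bigr => i _; rewrite nth_mkseq //. by rewrite mulnDr.
Qed.

Arguments rep_add {c m n}.

Lemma rep_gen c j q : (j < size c)%N -> representable c (q * nth 0 c j).
Proof.
move=> Hj.
have -> : (q * nth 0 c j = \sum_(i < size c) nth 0 c i * (fun i0 : nat => if i0 == j then q else 0) i)%N.
  rewrite (bigD1 (Ordinal Hj)) //= eqxx big1 ?addn0; first by rewrite mulnC.
  move=> i /eqP Hi /=; case: eqP => [E|]; last by rewrite muln0.
  by exfalso; apply: Hi; apply: val_inj; rewrite /= E.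
exact: (rep_fun c (fun i0 : nat => if i0 == j then q else 0)).
Qed.

Lemma size_gensA a h d k : size (gensA a h d k) = k.+1.
Proof. by rewrite /gensA /= size_map size_iota. Qed.

Lemma nth_gensA0 a h d k : nth 0 (gensA a h d k) 0 = (h*a + d)%N.
Proof. by []. Qed.

Lemma nth_gensAS a h d k j : (j < k)%N ->
  nth 0 (gensA a h d k) j.+1 = (h*a + 2*j.+1*d)%N.
Proof.
move=> Hj; rewrite /gensA /= (nth_map 0) ?size_iota // nth_iota //.
Qed.

Lemma Fw_form H d k w : exists n, Fw H d k w = (H * n + d * w)%N.
Proof.
case: w => [|w] /=; first by exists 0%N; timeout 20 lia.
by case: ifP => _; eexists.
Qed.

Lemma rep_Fw a h d k w : (0 < k)%N -> representable (gensA a h d k) (Fw (h*a) d k w).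
Proof.
move=> k0; case: w => [|w] /=.
  by have := rep_gen (gensA a h d k) 0 0; rewrite size_gensA mul0n; apply.
set i := w %/ (2*k); set u := w %% (2*k).
have Hw : w = (i * (2*k) + u)%N by rewrite /i /u -divn_eq.
have Hu : (u < 2*k)%N by rewrite /u ltn_mod; timeout 20 lia.
have Ci : representable (gensA a h d k) (i * (h*a + 2*k*d)).
  have := rep_gen (gensA a h d k) k.-1.+1 i.
  rewrite size_gensA nth_gensAS; last timeout 20 lia.
  by rewrite prednK //; apply; timeout 20 lia.
have C0 : representable (gensA a h d k) (1 * (h*a + d)).
  by have := rep_gen (gensA a h d k) 0 1; rewrite size_gensA; apply.
case: ifP => Hc.
  case/orP: Hc => [Ho|/eqP Hz].
  - have Cj : representable (gensA a h d k) (1 * (h*a + 2*(u./2).+1*d)).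
      have := rep_gen (gensA a h d k) (u./2).+1 1.
      rewrite size_gensA nth_gensAS; last first.
        have := odd_double_half u; rewrite Ho; timeout 20 lia.
      apply; have := odd_double_half u; rewrite Ho; timeout 20 lia.
    have := rep_add Cj Ci.
    have E := odd_double_half u; rewrite Ho /= in E.
    congr representable. rewrite Hw. rewrite -E. rewrite -E in Hu. timeout 20 nia.
  - have := rep_add C0 Ci. congr representable. rewrite Hw Hz. timeout 20 nia.
have Ho : odd u = false by move: Hc; case: (odd u).
have Hz : u != 0%N by move: Hc; rewrite Ho /=; move=> ->.
have E := odd_double_half u; rewrite Ho /= in E.
have Cj : representable (gensA a h d k) (1 * (h*a + 2*(u./2)*d)).
  have := rep_gen (gensA a h d k) (u./2).-1.+1 1.
  rewrite size_gensA nth_gensAS; last by timeout 20 lia.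
  rewrite prednK; last by timeout 20 lia.
  apply; timeout 20 lia.
have := rep_add C0 (rep_add Cj Ci). congr representable.
rewrite Hw -E. rewrite -E in Hu. timeout 20 nia.
Qed.
Lemma rep_decomp a h d k m : (0 < k)%N -> representable (gensA a h d k) m ->
  exists nn ww, [/\ m = (h*a*nn + d*ww)%N, (ww <= 2*k*nn)%N &
     (odd ww -> ww + 2*k <= 1 + 2*k*nn)%N].
Proof.
Set Printing Coercions.
move=> k0 [xs [Hs ->]].
rewrite size_gensA big_ord_recl nth_gensA0.
set x0 := nth 0 xs 0.
set P := (\sum_(i < k) nth 0 xs i.+1)%N.
set E := (\sum_(i < k) i.+1 * nth 0 xs i.+1)%N.
have HS : (\sum_(i < k) nth 0 (gensA a h d k) (bump 0 i) * nth 0 xs (bump 0 i)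
   = h*a*P + d*(2*E))%N.
  rewrite /P /E !big_distrr -big_split /=; apply: eq_bigr => i _.
  rewrite add0n (nth_map 0) ?size_iota // nth_iota // add1n. ring.
have HE : (E <= k * P)%N.
  rewrite /E /P big_distrr /=; apply: leq_sum => i _.
  by rewrite leq_mul2r ltn_ord orbT.
exists (x0 + P)%N, (x0 + 2*E)%N; split.
- rewrite HS /x0. ring.
- nia.
- rewrite oddD oddM /= addbF => Ho.
  have : (1 <= x0)%N by case: (x0) Ho.
  nia.
Qed.
Lemma Fw_split H d k w : (0 < k)%N ->
  exists i u, [/\ w = (i * (2*k) + u)%N, (u < 2*k)%N &
    Fw H d k w.+1 = if odd u || (u == 0%N) then (H*(i+1) + d*w.+1)%N else (H*(i+2) + d*w.+1)%N].
Proof.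
move=> k0; exists (w %/ (2*k))%N, (w %% (2*k))%N; split => //.
- exact: divn_eq.
- rewrite ltn_mod; lia.
Qed.

Lemma Fw_le_eq H d k nn ww : (0 < k)%N -> (ww <= 2*k*nn)%N ->
  (odd ww -> ww + 2*k <= 1 + 2*k*nn)%N -> (Fw H d k ww <= H*nn + d*ww)%N.
Proof.
move=> k0; case: ww => [|w] H1 H2; first by rewrite /Fw.
have [i [u [Hw Hu ->]]] := Fw_split H d k w k0.
case: ifP => Hc.
  rewrite leq_add2r leq_mul2l; apply/orP; right.
  rewrite Hw in H1. nia.
have Ho : odd u = false by move: Hc; case: (odd u).
have Hz : u != 0%N by move: Hc; rewrite Ho /=; move=> ->.
have : odd w.+1.
  by rewrite Hw /= oddD oddM Ho (oddM 2) /= andbF.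
move/H2; rewrite Hw => H3.
rewrite leq_add2r leq_mul2l; apply/orP; right.
nia.
Qed.

Lemma Fw_le H d k nn w ww : (0 < k)%N -> (w <= ww)%N -> (ww <= 2*k*nn)%N ->
  (Fw H d k w <= H*(nn+1) + d*w)%N.
Proof.
move=> k0; case: w => [|w] H0 H1; first by rewrite /Fw.
have [i [u [Hw Hu ->]]] := Fw_split H d k w k0.
have Hi : (i + 2 <= nn + 1)%N by rewrite Hw in H0; nia.
case: ifP => _; rewrite leq_add2r leq_mul2l; apply/orP; right; lia.
Qed.

Lemma mod_cancel a d u w : coprime a d -> (u < a)%N -> (w < a)%N ->
  (d * u = d * w %[mod a])%N -> u = w.
Proof.
move=> co Hu Hw E.
wlog le : u w Hu Hw E / (u <= w)%N.
  move=> W; case: (leqP u w) => H; first exact: W.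
  by symmetry; apply: W; by [|exact/esym|exact: ltnW].
have : (a %| d * (w - u))%N.
  by rewrite mulnBr -eqn_mod_dvd ?leq_mul2l ?le ?orbT // E.
rewrite Gauss_dvdr // => Hd.
have : (w - u < a)%N by lia.
case: (posnP (w - u)) => [|P]; first lia.
have := dvdn_leq P Hd; lia.
Qed.
Lemma isN_Fw a h d k w : coprime a d -> (0 < k)%N -> (h < d)%N -> (w < a)%N ->
  isN a (gensA a h d k) ((d*w) %% a) (Fw (h*a) d k w).
Proof.
move=> co k0 hd wa.
have a0 : (0 < a)%N by lia.
have modF : forall n ww, ((h*a*n + d*ww) %% a = (d*ww) %% a)%N.
  by move=> n ww; rewrite (_ : h*a*n = h*n*a)%N ?modnMDl //; ring.
split; [|split].
- have [n ->] := Fw_form (h*a) d k w. by rewrite modF modn_mod.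
- exact: rep_Fw.
move=> m Hm Hr.
have [nn [ww [Em H1 H2]]] := rep_decomp a h d k m k0 Hr.
have Hww : (ww %% a = w)%N.
  apply: (mod_cancel a d _ _ co); first by rewrite ltn_pmod.
  - done.
  by rewrite modnMmr -(modF nn) -Em Hm modn_mod.
have Eww := divn_eq ww a; rewrite Hww in Eww.
case: (posnP (ww %/ a)) => Hq.
  rewrite Hq mul0n add0n in Eww; subst ww.
  rewrite Em; exact: Fw_le_eq.
have := Fw_le (h*a) d k nn w ww k0 (_ : w <= ww)%N H1.
rewrite Em; move=> /(_ ltac:(lia)) Hle.
apply: (leq_trans Hle).
rewrite Eww; nia.
Qed.

Local Open Scope ring_scope.

Lemma Fw_1 H d k : (0 < k)%N -> Fw H d k 1 = (H + d)%N.
Proof. move=> k0; rewrite /Fw div0n mod0n /=; lia. Qed.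

Lemma Fw_even H d k j : (j < k)%N -> Fw H d k (2 + 2*j) = (H + 2*d + 2*d*j)%N.
Proof.
move=> jk; rewrite /Fw (_ : 2 + 2*j = (2*j+1).+1)%N; last lia.
rewrite divn_small ?modn_small; try lia.
rewrite oddD oddM /=. lia.
Qed.

Lemma Fw_odd H d k j : (j.+1 < k)%N -> Fw H d k (3 + 2*j) = (2*H + 3*d + 2*d*j)%N.
Proof.
move=> jk; rewrite /Fw (_ : 3 + 2*j = (2*j+2).+1)%N; last lia.
rewrite divn_small ?modn_small; try lia.
rewrite oddD oddM /= (_ : (2*j+2 == 0)%N = false); last lia.
lia.
Qed.

Lemma Fw_shift H d k w : (0 < k)%N ->
  Fw H d k (w.+1 + 2*k) = (Fw H d k w.+1 + (H + 2*k*d))%N.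
Proof.
move=> k0; rewrite addSn /Fw.
rewrite (_ : w + 2*k = 1 * (2*k) + w)%N; last lia.
rewrite divnMDl; last lia.
rewrite modnMDl.
case: ifP => _; lia.
Qed.

Lemma Fw_block H d k i u : (0 < k)%N ->
  Fw H d k (1 + i*(2*k) + u) = (Fw H d k (1 + u) + i * (H + 2*k*d))%N.
Proof.
move=> k0; elim: i => [|i IH]; first by rewrite !mul0n !addn0.
rewrite (_ : 1 + i.+1 * (2*k) + u = (i*(2*k) + u).+1 + 2*k)%N; last lia.
rewrite Fw_shift // (_ : (i*(2*k)+u).+1 = 1 + i*(2*k) + u)%N; last lia.
rewrite IH. ring.
Qed.

Lemma sum_cat (R : nmodType) (g : nat -> R) m n :
  \sum_(i < m + n) g i = \sum_(i < m) g i + \sum_(i < n) g (m + i)%N.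
Proof. by rewrite big_split_ord. Qed.

Lemma sum_par (R : nmodType) (f : nat -> R) L :
  \sum_(u < L) f u = \sum_(j < uphalf L) f (2*j)%N + \sum_(j < L./2) f (2*j+1)%N.
Proof.
elim: L => [|L IH]; first by rewrite !big_ord0 addr0.
rewrite big_ord_recr /= IH.
have E := odd_double_half L.
case Ho: (odd L) E => /= E.
- have U : uphalf L = (L./2).+1 by lia.
  rewrite U [X in _ = _ + X]big_ord_recr /= addrA. congr (_ + f _). lia.
- have U : uphalf L = (L./2) by lia.
  rewrite U [in RHS]big_ord_recr /= [in RHS]addrAC. congr (_ + f _). lia.
Qed.

Lemma geo (R : pzRingType) (y : R) n : 1 - y ^+ n = (1 - y) * \sum_(i < n) y ^+ i.
Proof. by rewrite -opprB subrX1 -mulNr opprB. Qed.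

Lemma blockP (R : comPzRingType) (x : R) H d k L : (0 < k)%N -> (L <= 2*k-1)%N ->
  \sum_(u < 1 + L) x ^+ Fw H d k (1+u) =
  x ^+ (H+d) + x ^+ (H + 2*d) * \sum_(j < uphalf L) (x ^+ (2*d)) ^+ j
   + x ^+ (2*H + 3*d) * \sum_(j < L./2) (x ^+ (2*d)) ^+ j.
Proof.
move=> k0 hL.
rewrite add1n big_ord_recl (_ : (1 + @nat_of_ord L.+1 ord0 = 1)%N) // Fw_1 //.
rewrite (eq_bigr (fun u : 'I_L => (fun v : nat => x ^+ Fw H d k (2 + v)) u)); last first.
  by move=> i _; rewrite /= /bump leq0n add1n.
rewrite (sum_par _ (fun v => x ^+ Fw H d k (2+v)) L) addrA !mulr_sumr; congr (_ + _ + _); apply: eq_bigr => j _.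
- rewrite Fw_even; last by have := ltn_ord j; lia.
  by rewrite exprD -exprM.
- rewrite (_ : 2 + (2 * j + 1) = 3 + 2 * j)%N; last lia.
  rewrite Fw_odd; last by have := ltn_ord j; lia.
  by rewrite exprD -exprM.
Qed.

Lemma shift_sum (R : comPzRingType) (x : R) H d k s L : (0 < k)%N ->
  \sum_(u < L) x ^+ Fw H d k (1 + s*(2*k) + u) =
  (x ^+ (H + 2*k*d)) ^+ s * \sum_(u < L) x ^+ Fw H d k (1 + u).
Proof.
move=> k0; rewrite mulr_sumr; apply: eq_bigr => u _.
by rewrite Fw_block // exprD mulrC -exprM mulnC.
Qed.

Lemma sum_pref (R : comPzRingType) (x : R) H d k s : (0 < k)%N ->
  \sum_(w < 1 + s*(2*k)) x ^+ Fw H d k w =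
  1 + (\sum_(i < s) (x ^+ (H + 2*k*d)) ^+ i) * \sum_(u < 2*k) x ^+ Fw H d k (1+u).
Proof.
move=> k0; elim: s => [|s IH].
  by rewrite mul0n big_ord0 mul0r addr0 big_ord1.
rewrite (_ : 1 + s.+1*(2*k) = (1 + s*(2*k)) + 2*k)%N; last lia.
rewrite (sum_cat _ (fun w => x ^+ Fw H d k w)) IH.
have GS : \sum_(i < s.+1) (x ^+ (H + 2*k*d)) ^+ i = \sum_(i < s) (x ^+ (H + 2*k*d)) ^+ i + (x ^+ (H + 2*k*d)) ^+ s by rewrite big_ord_recr.
rewrite GS shift_sum //. ring.
Qed.

Lemma sum_all (R : comPzRingType) (x : R) H d k s L : (0 < k)%N ->
  \sum_(w < 1 + s*(2*k) + L) x ^+ Fw H d k w =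
  1 + (\sum_(i < s) (x ^+ (H + 2*k*d)) ^+ i) * \sum_(u < 2*k) x ^+ Fw H d k (1+u)
  + (x ^+ (H + 2*k*d)) ^+ s * \sum_(u < L) x ^+ Fw H d k (1+u).
Proof.
move=> k0; rewrite (sum_cat _ (fun w => x ^+ Fw H d k w)) sum_pref // shift_sum //.
Qed.

Lemma sum_bound (R : nmodType) (g : nat -> R) n m : n = m ->
  \sum_(i < n) g i = \sum_(i < m) g i.
Proof. by move->. Qed.

Theorem mainTheorem14 (R : fieldType) (a h d k s t : nat) (N : nat -> nat)
  (x : R) :
  coprime a d -> (0 < h)%N -> (0 < k)%N -> (2 < a)%N -> (h < d)%N ->
  (1 <= 2 * k <= a - 1)%N ->
  (a - 1 = 2 * k * s + t)%N -> (1 <= t <= 2 * k)%N ->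
  (forall r, (r < a)%N -> isN a (gensA a h d k) r (N r)) ->
  1 - x ^+ (h * a + 2 * k * d) != 0 -> 1 - x ^+ (2 * d) != 0 ->
  \sum_(r < a) x ^+ N r =
    1
    + x ^+ (h * a + d) * (1 - x ^+ ((h * a + 2 * k * d) * (s + 1)))
        / (1 - x ^+ (h * a + 2 * k * d))
    + x ^+ (h * a + 2 * d) * (1 - x ^+ ((h * a + 2 * k * d) * s))
        * (1 - x ^+ (2 * d * k))
        / ((1 - x ^+ (h * a + 2 * k * d)) * (1 - x ^+ (2 * d)))
    + x ^+ (2 * h * a + 3 * d) * (1 - x ^+ ((h * a + 2 * k * d) * s))
        * (1 - x ^+ (2 * d * (k - 1)))
        / ((1 - x ^+ (h * a + 2 * k * d)) * (1 - x ^+ (2 * d)))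
    + (if odd t then
         x ^+ (h * a * (s + 1) + d * (2 * k * s + 2)) * (1 - x ^+ (d * (t - 1)))
           / (1 - x ^+ (2 * d))
         + x ^+ (h * a * (s + 2) + d * (2 * k * s + 3)) * (1 - x ^+ (d * (t - 1)))
           / (1 - x ^+ (2 * d))
       else
         x ^+ (h * a * (s + 1) + d * (2 * k * s + 2)) * (1 - x ^+ (d * t))
           / (1 - x ^+ (2 * d))
         + x ^+ (h * a * (s + 2) + d * (2 * k * s + 3)) * (1 - x ^+ (d * (t - 2)))
           / (1 - x ^+ (2 * d))).
Proof.
move=> co h0 k0 a2 hd /andP[k1 k2] Ea /andP[t1 t2] HN nY nz.
have a0 : (0 < a)%N by lia.
pose phi (w : 'I_a) : 'I_a := Ordinal (ltn_pmod (d * w) a0).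
have phi_inj : injective phi.
  move=> u v /(congr1 val) /= E; apply: val_inj => /=.
  apply: (mod_cancel a d _ _ co) => //; exact/eqP.
rewrite (reindex_inj phi_inj) /=.
rewrite (eq_bigr (fun w : 'I_a => x ^+ Fw (h*a) d k w)); last first.
  move=> w _; congr (_ ^+ _).
  have [E1 [R1 M1]] := HN _ (ltn_pmod (d * w) a0).
  have [E2 [R2 M2]] := isN_Fw a h d k w co k0 hd (ltn_ord w).
  apply/eqP; rewrite eqn_leq; apply/andP; split.
  - by apply: M1.
  - by apply: M2.
rewrite (sum_bound _ (fun w => x ^+ Fw (h*a) d k w) _ _ (_ : a = 1 + s * (2*k) + t)%N); last lia.
rewrite sum_all //.
rewrite (sum_bound _ (fun u => x ^+ Fw (h*a) d k (1+u)) _ _ (_ : 2*k = 1 + (2*k-1))%N); last lia.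
rewrite (sum_bound _ (fun u => x ^+ Fw (h*a) d k (1+u)) _ _ (_ : t = 1 + (t-1))%N); last lia.
rewrite !blockP //; try lia.
rewrite (_ : uphalf (2*k-1) = k)%N; last lia.
rewrite (_ : (2*k-1)./2 = k-1)%N; last lia.
rewrite (_ : uphalf (t-1) = t./2)%N; last lia.
rewrite (_ : (2*h*a = 2*(h*a))%N); last ring.
rewrite (_ : (h*a*(s+1) + d*(2*k*s+2) = (h*a+2*k*d)*s + (h*a+2*d))%N); last ring.
rewrite (_ : (h*a*(s+2) + d*(2*k*s+3) = (h*a+2*k*d)*s + (2*(h*a)+3*d))%N); last ring.
rewrite !(exprD x ((h*a+2*k*d)*s)) !(exprM x (h*a+2*k*d)) !(exprM x (2*d)).
have Et : if odd t then (d*(t-1) = 2*d*(t./2))%N /\ ((t-1)./2 = t./2)%N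
          else (d*t = 2*d*(t./2))%N /\ (d*(t-2) = 2*d*((t-1)./2))%N.
  case: ifP => Ho; split; try lia.
  - rewrite {1}(_ : t = 2 * t./2)%N; [ring | lia].
  - rewrite (_ : t - 2 = 2 * (t-1)./2)%N; [ring | lia].
have GS : \sum_(i < s + 1) (x ^+ (h*a + 2*k*d)) ^+ i =
    \sum_(i < s) (x ^+ (h*a + 2*k*d)) ^+ i + (x ^+ (h*a + 2*k*d)) ^+ s.
  by rewrite addn1 big_ord_recr.
rewrite (geo _ (x ^+ (h*a + 2*k*d)) (s+1)) GS.
rewrite (geo _ (x ^+ (h*a + 2*k*d)) s).
rewrite (geo _ (x ^+ (2*d)) k) (geo _ (x ^+ (2*d)) (k-1)).
case Ho: (odd t) Et => -[E1 E2];
  rewrite ?E1 ?E2 !(exprM x (2*d)) ?(geo _ (x ^+ (2*d)) (t./2)) ?(geo _ (x ^+ (2*d)) ((t-1)./2));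
  field; by rewrite nY nz.
Qed.
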